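(* Let $(X,\oplus,\odot,d)$ be any one of the spaces listed in the context, $\|x\|_{\mathcal F}=d(\tilde0,x)$. (i) If $A:X\to\mathbb{R}$ is linear and continuous at $\tilde0$, then $|A(x)|\le|||A|||_{\mathcal F}\|x\|_{\mathcal F}$ for all $x\in X$, and $|||A|||_{\mathcal F}=\sup\{|A(x)|:x\in X,\|x\|_{\mathcal F}\le1\}$. (ii) If $A:X\to X$ is linear and continuous at $\tilde0$, then $\|A(x)\|_{\mathcal F}\le|||A|||_{\mathcal F}\|x\|_{\mathcal F}$ for all $x\in X$, and $|||A|||_{\mathcal F}=\sup\{\|A(x)\|_{\mathcal F}:x\in X,\|x\|_{\mathcal F}\le1\}$.
   Context: Fuzzy numbers $\mathbb{R}_{\mathcal F}$: functions $u:\mathbb{R}\to[0,1]$ that are normal, fuzzy convex, upper semicontinuous, with compact support closure; level sets $[u]^r=[u_-(r),u_+(r)]$; $[u\oplus v]^r=[u]^r+[v]^r$, $[\lambda\odot u]^r=\lambda[u]^r$, $\tilde0=\chi_{\{0\}}$; $D(u,v)=\sup_{r\in[0,1]}\max\{|u_-(r)-v_-(r)|,|u_+(r)-v_+(r)|\}$. The admissible spaces $(X,\oplus,\odot,d)$ (operations pointwise/componentwise): $(\mathbb{R}_{\mathcal F},D)$; $C([a,b];\mathbb{R}_{\mathcal F})$ with sup-metric $D^*$; $L^p([a,b];\mathbb{R}_{\mathcal F})$ ($1\le p<\infty$) with $D_p(f,g)=(\int_a^bD(f,g)^p)^{1/p}$; $C^p([a,b];\mathbb{R}_{\mathcal F})$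 with $D_p^*(f,g)=\sum_{i=0}^pD^*(f^{(i)},g^{(i)})$; $l^p_{\mathbb{R}_{\mathcal F}}$ with $\rho_p(x,y)=(\sum_nD(x_n,y_n)^p)^{1/p}$; $m_{\mathbb{R}_{\mathcal F}}$, $c_{\mathbb{R}_{\mathcal F}}$, $c^{\tilde0}_{\mathbb{R}_{\mathcal F}}$ (bounded, convergent, null sequences) with $\mu(x,y)=\sup_nD(x_n,y_n)$; finite Cartesian products with max metric. Linear: for $A:X\to\mathbb{R}$, $A(x\oplus y)=A(x)+A(y)$, $A(\lambda\odot x)=\lambda A(x)$; for $A:X\to X$, $A(x\oplus y)=A(x)\oplus A(y)$, $A(\lambda\odot x)=\lambda\odot A(x)$ ($\lambda\in\mathbb{R}$). For such $A$ continuous at $\tilde0$, $\mathcal M_A=\{M>0:|A(x)|\le M\|x\|_{\mathcal F}\ \forall x\}$ (resp. $\{M>0:\|A(x)\|_{\mathcal F}\le M\|x\|_{\mathcal F}\ \forall x\}$) and $|||A|||_{\mathcal F}=\inf\mathcal M_A$. *)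

(* Defs.v *)
From mathcomp Require Import all_boot all_order all_algebra.
From mathcomp Require Import all_classical all_reals all_analysis.
Import Order.TTheory GRing.Theory Num.Theory.
Import numFieldNormedType.Exports.

Set Implicit Arguments.
Unset Strict Implicit.
Unset Printing Implicit Defensive.

Local Open Scope ring_scope.
Local Open Scope classical_set_scope.

Section Fuzzy.
Variable R : realType.

Definition is_fuzzy (u : R -> R) : Prop :=
  [/\ (forall x, 0 <= u x <= 1),
      (exists x, u x = 1),
      (forall x y l, 0 <= l <= 1 ->
          Num.min (u x) (u y) <= u (l * x + (1 - l) * y)),
      (forall x e, 0 < e -> exists2 d, 0 < d &
          forall y, `|y - x| < d -> u y < u x + e)
    & compact (closure [set x | 0 < u x])].

Record fuzzy := Fuzzy { fz :> R -> R ; fzP : is_fuzzy fz }.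

Definition level (u : fuzzy) (r : R) : set R :=
  if r == 0 then closure [set x | 0 < u x] else [set x | r <= u x].

Definition flow (u : fuzzy) (r : R) : R := inf (level u r).
Definition fupp (u : fuzzy) (r : R) : R := sup (level u r).

Definition fD (u v : fuzzy) : R :=
  sup [set Num.max `|flow u r - flow v r| `|fupp u r - fupp v r|
      | r in `[0, 1]].

Definition chi0 (x : R) : R := if x == 0 then 1 else 0.

Lemma chi0_fuzzy : is_fuzzy chi0.
Proof.
have supp : [set x | 0 < chi0 x] = [set 0].
  apply/seteqP; split => x /=; rewrite /chi0.
    by case: eqP => // _; rewrite ltxx.
  by move=> ->; rewrite eqxx ltr01.
split.
- by move=> x; rewrite /chi0; case: eqP => _; rewrite ?ler01 ?lexx.
- by exists 0; rewrite /chi0 eqxx.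
- move=> x y l _; rewrite /chi0.
  case: (x =P 0) => [->|_]; case: (y =P 0) => [->|_];
    rewrite ?mulr0 ?addr0 ?eqxx ?minxx ?ge_min ?lexx ?orbT //;
    by case: eqP; rewrite ?ler01 ?lexx ?orbT.
- move=> x e e0; case: (x =P 0) => [->|/eqP x0].
    exists 1 => // y _; rewrite /chi0 eqxx; case: eqP => _.
      by rewrite ltrDl.
    by rewrite (lt_le_trans ltr01) // lerDl ltW.
  exists `|x|; first by rewrite normr_gt0.
  move=> y hy; rewrite /chi0 (negbTE x0); case: (y =P 0) => [y0|_].
    by move: hy; rewrite y0 sub0r normrN ltxx.
  by rewrite add0r.
- rewrite supp -(proj1 (closure_id _)); first exact: compact_set1.
  apply: compact_closed; [exact: Rhausdorff|exact: compact_set1].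
Qed.

Definition fzero : fuzzy := Fuzzy chi0_fuzzy.

Definition fadd (u v : fuzzy) : fuzzy :=
  match pselect (exists w : fuzzy, forall r, 0 <= r <= 1 ->
          level w r = [set x + y | x in level u r & y in level v r]) with
  | left H => proj1_sig (cid H)
  | right _ => u
  end.

Definition fscale (l : R) (u : fuzzy) : fuzzy :=
  match pselect (exists w : fuzzy, forall r, 0 <= r <= 1 ->
          level w r = [set l * x | x in level u r]) with
  | left H => proj1_sig (cid H)
  | right _ => u
  end.

(** * Fuzzy-valued functions on [a,b] (taken 0~ outside [a,b]) *)

Definition in_ab (a b t : R) := a <= t <= b.

Definition zero_out (a b : R) (f : R -> fuzzy) :=
  forall t, ~ in_ab a b t -> f t = fzero.

Definition fcont_on (a b : R) (f : R -> fuzzy) :=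
  forall t, in_ab a b t -> forall e, 0 < e -> exists2 d, 0 < d &
    forall s, in_ab a b s -> `|s - t| < d -> fD (f s) (f t) < e.

Definition fDstar (a b : R) (f g : R -> fuzzy) : R :=
  sup [set fD (f t) (g t) | t in `[a, b]].

(* Hukuhara (H-)derivative at t of f on [a,b] (one-sided at the endpoints):
   the H-differences f(t+h) -H f(t) and f(t) -H f(t-h) exist and, divided
   by h, tend to g as h -> 0+. *)
Definition Hderiv_at (a b : R) (f : R -> fuzzy) (t : R) (g : fuzzy) :=
  forall e, 0 < e -> exists2 d, 0 < d & forall h, 0 < h < d ->
    (t + h <= b -> exists2 w : fuzzy, f (t + h) = fadd (f t) w &
                                      fD (fscale h^-1 w) g < e) /\
    (a <= t - h -> exists2 w : fuzzy, f t = fadd (f (t - h)) w &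
                                      fD (fscale h^-1 w) g < e).

(* the H-derivative function (0~ outside [a,b] or where it does not exist) *)
Definition hderiv (a b : R) (f : R -> fuzzy) (t : R) : fuzzy :=
  match pselect (exists g : fuzzy, in_ab a b t /\ Hderiv_at a b f t g) with
  | left H => proj1_sig (cid H)
  | right _ => fzero
  end.

Definition is_Cp (a b : R) (p : nat) (f : R -> fuzzy) :=
  zero_out a b f /\
  forall i, (i <= p)%N ->
    fcont_on a b (iter i (hderiv a b) f) /\
    ((i < p)%N -> forall t, in_ab a b t ->
        exists g, Hderiv_at a b (iter i (hderiv a b) f) t g).

Definition is_Lp (a b p : R) (f : R -> fuzzy) :=
  [/\ zero_out a b f,
      (forall r, 0 <= r <= 1 ->
         measurable_fun `[a, b] (fun t => flow (f t) r) /\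
         measurable_fun `[a, b] (fun t => fupp (f t) r))
    & (lebesgue_measure : set _ -> \bar R).-integrable `[a, b]
          (fun t => ((fD (f t) fzero) `^ p)%:E)].

Definition fDp (a b p : R) (f g : R -> fuzzy) : R :=
  (fine (\int[lebesgue_measure]_(t in `[a, b]) ((fD (f t) (g t)) `^ p)%:E))
     `^ (p^-1).

Definition is_lp (p : R) (x : nat -> fuzzy) :=
  (\sum_(n <oo) ((fD (x n) fzero) `^ p)%:E < +oo)%E.

Definition rho_p (p : R) (x y : nat -> fuzzy) : R :=
  (fine (\sum_(n <oo) ((fD (x n) (y n)) `^ p)%:E)%E) `^ (p^-1).

Definition is_bdd (x : nat -> fuzzy) := exists M, forall n, fD (x n) fzero <= M.

Definition is_conv (x : nat -> fuzzy) :=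
  exists l : fuzzy, forall e, 0 < e -> exists N, forall n, (N <= n)%N ->
    fD (x n) l < e.

Definition is_null (x : nat -> fuzzy) :=
  forall e, 0 < e -> exists N, forall n, (N <= n)%N -> fD (x n) fzero < e.

Definition mu_sup (x y : nat -> fuzzy) : R := sup (range (fun n => fD (x n) (y n))).

Inductive fspace :=
| S_RF
| S_C   of R & R
| S_Lp  of R & R & R
| S_Cp  of R & R & nat
| S_lp  of R
| S_m
| S_c
| S_c0
| S_prod of fspace & fspace.

Fixpoint wf_space (s : fspace) : Prop :=
  match s with
  | S_RF | S_m | S_c | S_c0 => True
  | S_C a b => a < b
  | S_Lp a b p => a < b /\ 1 <= p
  | S_Cp a b _ => a < b
  | S_lp p => 1 <= p
  | S_prod s1 s2 => wf_space s1 /\ wf_space s2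
  end.

(* ambient type of each fspace; membership is given by [smem] below *)
Fixpoint carrier (s : fspace) : Type :=
  match s with
  | S_RF => fuzzy
  | S_C _ _ | S_Lp _ _ _ | S_Cp _ _ _ => R -> fuzzy
  | S_lp _ | S_m | S_c | S_c0 => nat -> fuzzy
  | S_prod s1 s2 => (carrier s1 * carrier s2)%type
  end.

Fixpoint smem (s : fspace) : carrier s -> Prop :=
  match s return carrier s -> Prop with
  | S_RF => fun _ => True
  | S_C a b => fun f => zero_out a b f /\ fcont_on a b f
  | S_Lp a b p => fun f => is_Lp a b p f
  | S_Cp a b p => fun f => is_Cp a b p f
  | S_lp p => fun x => is_lp p x
  | S_m => fun x => is_bdd x
  | S_c => fun x => is_conv x
  | S_c0 => fun x => is_null x
  | S_prod s1 s2 => fun x => smem x.1 /\ smem x.2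
  end.

Fixpoint szero (s : fspace) : carrier s :=
  match s return carrier s with
  | S_RF => fzero
  | S_C _ _ | S_Lp _ _ _ | S_Cp _ _ _ => fun _ => fzero
  | S_lp _ | S_m | S_c | S_c0 => fun _ => fzero
  | S_prod s1 s2 => (szero s1, szero s2)
  end.

Fixpoint sadd (s : fspace) : carrier s -> carrier s -> carrier s :=
  match s return carrier s -> carrier s -> carrier s with
  | S_RF => fadd
  | S_C _ _ | S_Lp _ _ _ | S_Cp _ _ _ => fun f g t => fadd (f t) (g t)
  | S_lp _ | S_m | S_c | S_c0 => fun x y n => fadd (x n) (y n)
  | S_prod s1 s2 => fun x y => (sadd x.1 y.1, sadd x.2 y.2)
  end.

Fixpoint sscale (s : fspace) (l : R) : carrier s -> carrier s :=
  match s return carrier s -> carrier s with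
  | S_RF => fscale l
  | S_C _ _ | S_Lp _ _ _ | S_Cp _ _ _ => fun f t => fscale l (f t)
  | S_lp _ | S_m | S_c | S_c0 => fun x n => fscale l (x n)
  | S_prod s1 s2 => fun x => (sscale l x.1, sscale l x.2)
  end.

Fixpoint sdist (s : fspace) : carrier s -> carrier s -> R :=
  match s return carrier s -> carrier s -> R with
  | S_RF => fD
  | S_C a b => fDstar a b
  | S_Lp a b p => fDp a b p
  | S_Cp a b p => fun f g =>
      \sum_(i < p.+1) fDstar a b (iter i (hderiv a b) f) (iter i (hderiv a b) g)
  | S_lp p => rho_p p
  | S_m | S_c | S_c0 => mu_sup
  | S_prod s1 s2 => fun x y => Num.max (sdist x.1 y.1) (sdist x.2 y.2)
  end.

Definition snorm (s : fspace) (x : carrier s) : R := sdist (szero s) x.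

Definition lin_functional (s : fspace) (A : carrier s -> R) :=
  (forall x y, smem x -> smem y -> A (sadd x y) = A x + A y) /\
  (forall l x, smem x -> A (sscale l x) = l * A x).

Definition cont0_functional (s : fspace) (A : carrier s -> R) :=
  forall e, 0 < e -> exists2 d, 0 < d &
    forall x, smem x -> sdist (szero s) x < d -> `|A x - A (szero s)| < e.

Definition opnorm_functional (s : fspace) (A : carrier s -> R) : R :=
  inf [set M | 0 < M /\ forall x, smem x -> `|A x| <= M * snorm x].

Definition lin_operator (s : fspace) (A : carrier s -> carrier s) :=
  (forall x, smem x -> smem (A x)) /\
  (forall x y, smem x -> smem y -> A (sadd x y) = sadd (A x) (A y)) /\
  (forall l x, smem x -> A (sscale l x) = sscale l (A x)).

Definition cont0_operator (s : fspace) (A : carrier s -> carrier s) :=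
  forall e, 0 < e -> exists2 d, 0 < d &
    forall x, smem x -> sdist (szero s) x < d -> sdist (A (szero s)) (A x) < e.

Definition opnorm_operator (s : fspace) (A : carrier s -> carrier s) : R :=
  inf [set M | 0 < M /\ forall x, smem x -> snorm (A x) <= M * snorm x].

End Fuzzy.

(* Main.v *)
Require Import Defs.

From mathcomp Require Import all_boot all_order all_algebra.
From mathcomp Require Import all_classical all_reals all_analysis.
Import Order.TTheory GRing.Theory Num.Theory.
Import numFieldNormedType.Exports.
Set Implicit Arguments.
Unset Strict Implicit.
Unset Printing Implicit Defensive.
Local Open Scope ring_scope.
Local Open Scope classical_set_scope.

From mathcomp Require Import ring lra.


Section A.
Variable R : realType.
Implicit Types (S : set R) (k : R).

Lemma sup_ge0' S : (forall x, S x -> 0 <= x) -> 0 <= sup S.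
Proof.
move=> h; case: (pselect (has_sup S)) => [hs|nh]; last by rewrite sup_out.
have [x Sx] := hs.1.
by apply: le_trans (h _ Sx) _; apply: sup_upper_bound.
Qed.

Lemma supZ S k : 0 <= k -> sup [set k * x | x in S] = k * sup S.
Proof.
move=> kge0; have [->|kn0] := eqVneq k 0.
  rewrite mul0r; case: (pselect (S !=set0)) => [[x Sx]|nS].
    have -> : [set 0 * x | x in S] = [set 0].
      apply/seteqP; split=> y /=; first by case=> z _ <-; rewrite mul0r.
      by move=> ->; exists x => //; rewrite mul0r.
    by rewrite sup1.
  have -> : [set 0 * x | x in S] = set0.
    apply/seteqP; split=> y //= [z Sz _]; apply: nS; by exists z.
  by rewrite sup0.
have k0 : 0 < k by rewrite lt_neqAle eq_sym kn0.
case: (pselect (S !=set0)) => [neS|nS]; last first.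
  have -> : S = set0 by apply/seteqP; split=> y // Sy; apply: nS; exists y.
  by rewrite image_set0 sup0 mulr0.
have neI : [set k * x | x in S] !=set0 by case: neS => x Sx; exists (k * x), x.
case: (pselect (has_ubound S)) => [ubS|nubS].
  have hsS : has_sup S by [].
  apply/eqP; rewrite eq_le; apply/andP; split.
    apply: ge_sup => // y [x Sx <-]; rewrite ler_pM2l //.
    exact: sup_upper_bound.
  have hsI : has_sup [set k * x | x in S].
    split => //; case: ubS => M hM; exists (k * M) => y [x Sx <-].
    by rewrite ler_pM2l // hM.
  rewrite -ler_pdivlMl //; apply: ge_sup => // x Sx.
  rewrite ler_pdivlMl //; apply: sup_upper_bound => //; by exists x.
have nI : ~ has_ubound [set k * x | x in S].
  case=> M hM; apply: nubS; exists (M / k) => x Sx.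
  by rewrite ler_pdivlMr // mulrC; apply: hM; exists x.
rewrite !sup_out ?mulr0 //; by case.
Qed.

Lemma supZ_img (T : Type) (D : set T) (F : T -> R) k : 0 <= k ->
  sup [set k * F t | t in D] = k * sup [set F t | t in D].
Proof.
move=> k0; rewrite -supZ //; congr sup; apply/seteqP; split => y /=.
  by case=> t Dt <-; exists (F t) => //; exists t.
by case=> x [t Dt <-] <-; exists t.
Qed.

Lemma eq_sup_img (T : Type) (D : set T) (F G : T -> R) :
  (forall t, D t -> F t = G t) ->
  sup [set F t | t in D] = sup [set G t | t in D].
Proof.
move=> h; congr sup; apply/seteqP; split => y /= [t Dt <-]; exists t => //.
  by rewrite h. by rewrite h.
Qed.

Lemma infZ S k : 0 <= k -> inf [set k * x | x in S] = k * inf S.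
Proof.
move=> k0; rewrite /inf mulrN -supZ //; congr (- sup _).
apply/seteqP; split => y /=.
  by case=> z [x Sx <-] <-; exists (-x); [by exists x|]; rewrite mulrN.
by case=> z [x Sx <-] <-; exists (k * x); [by exists x|]; rewrite mulrN.
Qed.

Lemma infN S : inf [set - x | x in S] = - sup S.
Proof.
rewrite /inf; congr (- sup _); apply/seteqP; split => y /=.
  by case=> z [x Sx <-] <-; rewrite opprK.
by move=> Sy; exists (- y); [by exists y|]; rewrite opprK.
Qed.

Lemma supN S : sup [set - x | x in S] = - inf S.
Proof. by rewrite /inf opprK. Qed.

Lemma infZN S k : k <= 0 -> inf [set k * x | x in S] = k * sup S.
Proof.
move=> k0; have -> : [set k * x | x in S] = [set - y | y in [set (- k) * x | x in S]].
  apply/seteqP; split => y /=.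
    by case=> x Sx <-; exists (- k * x); [by exists x|]; rewrite mulNr opprK.
  by case=> z [x Sx <-] <-; exists x => //; rewrite mulNr opprK.
by rewrite infN supZ ?oppr_ge0 // mulNr opprK.
Qed.

Lemma supZN S k : k <= 0 -> sup [set k * x | x in S] = k * inf S.
Proof.
move=> k0; have -> : [set k * x | x in S] = [set - y | y in [set (- k) * x | x in S]].
  apply/seteqP; split => y /=.
    by case=> x Sx <-; exists (- k * x); [by exists x|]; rewrite mulNr opprK.
  by case=> z [x Sx <-] <-; exists x => //; rewrite mulNr opprK.
by rewrite supN infZ ?oppr_ge0 // mulNr opprK.
Qed.

End A.


Section B.
Variable R : realType.
Implicit Types (u v w : fuzzy R) (S : set R).

Lemma closureR S x :
  closure S x <-> forall e, 0 < e -> exists y, S y /\ `|x - y| < e.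
Proof.
split.
  move=> cl e e0; have [y [Sy bxy]] := cl _ (nbhsx_ballx x e e0).
  by exists y; split => //; move: bxy; rewrite -ball_normE.
move=> h B /nbhs_ballP [e /= e0 sB]; have [y [Sy hy]] := h e e0.
by exists y; split => //; apply: sB; rewrite -ball_normE.
Qed.

Lemma fuzzy_range u x : 0 <= u x <= 1.
Proof. by case: (fzP u) => h _ _ _ _. Qed.

Lemma fuzzy_ge0 u x : 0 <= u x.
Proof. by case/andP: (fuzzy_range u x). Qed.

Lemma fuzzy_le1 u x : u x <= 1.
Proof. by case/andP: (fuzzy_range u x). Qed.

Lemma fuzzy_normal u : exists x, u x = 1.
Proof. by case: (fzP u) => _ h _ _ _. Qed.

Lemma fuzzy_convex u x y l : 0 <= l <= 1 ->
  Num.min (u x) (u y) <= u (l * x + (1 - l) * y).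
Proof. by case: (fzP u) => _ _ h _ _; apply: h. Qed.

Lemma fuzzy_usc u x e : 0 < e -> exists2 d, 0 < d &
  forall y, `|y - x| < d -> u y < u x + e.
Proof. by case: (fzP u) => _ _ _ h _; apply: h. Qed.

Lemma fuzzy_compact u : compact (closure [set x | 0 < u x]).
Proof. by case: (fzP u) => _ _ _ _ h. Qed.

Lemma levelP u r : 0 < r -> level u r = [set x | r <= u x].
Proof. by move=> r0; rewrite /level gt_eqF. Qed.

Lemma level0 u : level u 0 = closure [set x | 0 < u x].
Proof. by rewrite /level eqxx. Qed.

Lemma level_ne u r : 0 <= r <= 1 -> level u r !=set0.
Proof.
case/andP=> r0 r1; have [x ux] := fuzzy_normal u; exists x.
move: r0; rewrite le_eqVlt => /orP[/eqP<-|r0].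
  by rewrite level0; apply: subset_closure; rewrite /= ux ltr01.
by rewrite levelP //= ux.
Qed.

Lemma fuzzy_ext u v : (forall r, 0 < r <= 1 -> level u r = level v r) -> u = v.
Proof.
move=> h.
have key : forall u v, (forall r, 0 < r <= 1 -> level u r = level v r) ->
    forall x, u x <= v x.
  move=> u' v' h' x; case: (lerP (u' x) 0) => [ux|ux].
    exact: le_trans ux (fuzzy_ge0 _ _).
  have := h' (u' x); rewrite ux fuzzy_le1 => /(_ isT).
  rewrite !levelP // => e.
  have : [set y | u' x <= u' y] x by rewrite /=.
  by rewrite e.
have e : (u : R -> R) = v.
  apply: funext => x; apply/eqP; rewrite eq_le key //= key //.
  by move=> r hr; rewrite h.
case: u v e {h} => f hf [g hg] /= e; subst g.
by congr Fuzzy; apply: Prop_irrelevance.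
Qed.

Lemma level_sub0 u r : 0 <= r -> level u r `<=` level u 0.
Proof.
rewrite le_eqVlt => /orP[/eqP<-//|r0] x; rewrite levelP // level0 /= => h.
by apply: subset_closure; rewrite /=; apply: lt_le_trans h.
Qed.

Lemma level0_bounded u : exists M, forall x, level u 0 x -> `|x| <= M.
Proof.
have := compact_bounded (@fuzzy_compact u); rewrite level0.
case=> M [_ hM]; exists (M + 1) => x hx; apply: (hM (M + 1)) => //.
by rewrite ltrDl.
Qed.

End B.


Section C.
Variable R : realType.
Implicit Types (u v w : fuzzy R) (S : set R).

Lemma closure_scale S c : c != 0 ->
  closure [set c * y | y in S] = [set c * y | y in closure S].
Proof.
move=> c0; have ca : 0 < `|c| by rewrite normr_gt0.
apply/seteqP; split => x.
  move/closureR => h; exists (x / c); last by rewrite mulrC divfK.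
  apply/closureR => e e0.
  have [_ [[y Sy <-] hy]] := h (e * `|c|) (mulr_gt0 e0 ca).
  exists y; split => //.
  rewrite -(ltr_pM2r ca) -normrM mulrBl divfK // mulrC; by [].
case=> y /closureR h <-; apply/closureR => e e0.
have [z [Sz hz]] := h (e / `|c|) (divr_gt0 e0 ca).
exists (c * z); split; first by exists z.
by rewrite -mulrBr normrM mulrC -ltr_pdivlMr.
Qed.

Definition scfun c u := fun x => u (x / c).

Lemma supp_scfun c u : c != 0 ->
  [set x | 0 < scfun c u x] = [set c * y | y in [set y | 0 < u y]].
Proof.
move=> c0; apply/seteqP; split => x /=.
  by move=> h; exists (x / c) => //; rewrite mulrC divfK.
by case=> y hy <-; rewrite /scfun mulrAC divff // mul1r.
Qed.

Lemma scfun_fuzzy c u : c != 0 -> is_fuzzy (scfun c u).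
Proof.
move=> c0; have ca : 0 < `|c| by rewrite normr_gt0.
split.
- by move=> x; apply: fuzzy_range.
- by have [x hx] := fuzzy_normal u; exists (c * x); rewrite /scfun mulrAC divff // mul1r.
- move=> x y l hl; rewrite /scfun.
  have -> : (l * x + (1 - l) * y) / c = l * (x / c) + (1 - l) * (y / c).
    by rewrite mulrDl !mulrA.
  exact: fuzzy_convex.
- move=> x e e0; have [d d0 hd] := fuzzy_usc u (x / c) e0.
  exists (d * `|c|); first exact: mulr_gt0.
  move=> y hy; apply: hd; rewrite -mulrBl normrM normfV ltr_pdivrMr //.
- rewrite supp_scfun // closure_scale //.
  apply: continuous_compact; last exact: (@fuzzy_compact _ u).
  apply: continuous_subspaceT => x; exact: mulrl_continuous.
Qed.

Definition scfz c u (c0 : c != 0) : fuzzy R := Fuzzy (scfun_fuzzy u c0).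

Lemma level_scfz c u (c0 : c != 0) r : 0 <= r ->
  level (scfz u c0) r = [set c * x | x in level u r].
Proof.
rewrite le_eqVlt => /orP[/eqP<-|r0].
  by rewrite !level0 /= supp_scfun // closure_scale.
rewrite !levelP //; apply/seteqP; split => x /=.
  by move=> h; exists (x / c) => //; rewrite mulrC divfK.
by case=> y hy <-; rewrite /scfun mulrAC divff // mul1r.
Qed.

Lemma level_fzero r : 0 <= r <= 1 -> level (fzero R) r = [set 0].
Proof.
case/andP; rewrite le_eqVlt => /orP[/eqP<-|r0] r1.
  rewrite level0 /=.
  have -> : [set x | 0 < chi0 x] = [set (0:R)].
    apply/seteqP; split => x /=; rewrite /chi0.
      by case: eqP => // _; rewrite ltxx.
    by move=> ->; rewrite eqxx ltr01.
  apply/esym/closure_id.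
  apply: compact_closed; [exact: Rhausdorff|exact: compact_set1].
rewrite levelP //; apply/seteqP; split => x /=; rewrite /chi0.
  by case: eqP => // _; rewrite leNgt r0.
by move=> ->; rewrite eqxx.
Qed.

Lemma fscale_exists c u : exists w : fuzzy R, forall r, 0 <= r <= 1 ->
  level w r = [set c * x | x in level u r].
Proof.
have [->|c0] := eqVneq c 0.
  exists (fzero R) => r hr; rewrite level_fzero //.
  have [x hx] := level_ne u hr.
  apply/seteqP; split => y /=; first by move=> ->; exists x; rewrite ?mul0r.
  by case=> z _ <-; rewrite mul0r.
by exists (scfz u c0) => r /andP[r0 _]; rewrite level_scfz.
Qed.

Lemma level_fscale c u r : 0 <= r <= 1 ->
  level (fscale c u) r = [set c * x | x in level u r].
Proof.
rewrite /fscale; case: pselect => [H|nH]; last by exfalso; apply: nH; exact: fscale_exists.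
by case: (cid H) => w /= hw; apply: hw.
Qed.

Lemma fscale_fzero c : fscale c (fzero R) = fzero R.
Proof.
apply: fuzzy_ext => r /andP[r0 r1]; have hr : 0 <= r <= 1 by rewrite ltW.
rewrite level_fscale // level_fzero //; apply/seteqP; split => y /=.
  by case=> z -> <-; rewrite mulr0.
by move=> ->; exists 0; rewrite ?mulr0.
Qed.

Lemma fscale0 u : fscale 0 u = fzero R.
Proof.
apply: fuzzy_ext => r /andP[r0 r1]; have hr : 0 <= r <= 1 by rewrite ltW.
rewrite level_fscale // level_fzero //; have [x hx] := level_ne u hr.
apply/seteqP; split => y /=; first by case=> z _ <-; rewrite mul0r.
by move=> ->; exists x; rewrite ?mul0r.
Qed.

Lemma fscaleA a b u : fscale a (fscale b u) = fscale (a * b) u.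
Proof.
apply: fuzzy_ext => r /andP[r0 r1]; have hr : 0 <= r <= 1 by rewrite ltW.
rewrite !level_fscale //; apply/seteqP; split => y /=.
  by case=> z [x hx <-] <-; exists x; rewrite ?mulrA.
by case=> x hx <-; exists (b * x); [exists x|rewrite mulrA].
Qed.

Lemma fscale1 u : fscale 1 u = u.
Proof.
apply: fuzzy_ext => r /andP[r0 r1]; have hr : 0 <= r <= 1 by rewrite ltW.
rewrite !level_fscale //; apply/seteqP; split => y /=.
  by case=> x hx <-; rewrite mul1r.
by move=> hy; exists y; rewrite ?mul1r.
Qed.

Lemma flow_fscale c u r : 0 <= r <= 1 ->
  flow (fscale c u) r = if 0 <= c then c * flow u r else c * fupp u r.
Proof.
move=> hr; rewrite /flow /fupp level_fscale //; case: ifP => c0.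
  exact: infZ.
by apply: infZN; rewrite ltW // ltNge c0.
Qed.

Lemma fupp_fscale c u r : 0 <= r <= 1 ->
  fupp (fscale c u) r = if 0 <= c then c * fupp u r else c * flow u r.
Proof.
move=> hr; rewrite /flow /fupp level_fscale //; case: ifP => c0.
  exact: supZ.
by apply: supZN; rewrite ltW // ltNge c0.
Qed.

Lemma fD_fscale c u v : fD (fscale c u) (fscale c v) = `|c| * fD u v.
Proof.
rewrite /fD -supZ_img //; apply: eq_sup_img => r; rewrite /= in_itv /= => /andP[r0 r1].
have hr : 0 <= r <= 1 by rewrite r0 r1.
rewrite !flow_fscale // !fupp_fscale //; case: ifP => _;
  rewrite -!mulrBr !normrM maxr_pMr //.
by rewrite maxC.
Qed.

Lemma fD_ge0 u v : 0 <= fD u v.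
Proof. by apply: sup_ge0' => x [r _ <-]; rewrite le_max normr_ge0. Qed.

Lemma fDC u v : fD u v = fD v u.
Proof. by rewrite /fD; apply: eq_sup_img => r _; rewrite distrC [X in Num.max _ X]distrC. Qed.

Lemma fDxx u : fD u u = 0.
Proof.
rewrite /fD; have -> : [set Num.max `|flow u r - flow u r| `|fupp u r - fupp u r| | r in `[(0:R), 1]] = [set 0].
  apply/seteqP; split => y /=; first by case=> r _ <-; rewrite !subrr normr0 maxxx.
  by move=> ->; exists 0; rewrite ?subrr ?normr0 ?maxxx // in_itv /= lexx ler01.
exact: sup1.
Qed.

Lemma fD0_fscale c u : fD (fzero R) (fscale c u) = `|c| * fD (fzero R) u.
Proof. by rewrite -fD_fscale fscale_fzero. Qed.

End C.


Section D.
Variable R : realType.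
Implicit Types (u v w : fuzzy R) (S : set R).

Lemma betw_comb (x y z : R) : x <= z <= y ->
  exists l, 0 <= l <= 1 /\ z = l * x + (1 - l) * y.
Proof.
case/andP=> xz zy; have [exy|nxy] := eqVneq x y.
  exists 1; rewrite ler01 lexx; split => //; subst y.
  have -> : z = x by apply/eqP; rewrite eq_le zy xz.
  by rewrite subrr mul0r addr0 mul1r.
have xy : 0 < y - x by rewrite subr_gt0 lt_neqAle nxy (le_trans xz zy).
exists ((y - z) / (y - x)); split.
  rewrite divr_ge0 ?subr_ge0 ?(le_trans xz zy) //= ler_pdivrMr // mul1r; lra.
have yx0 : y - x != 0 by rewrite lt0r_neq0.
set l := (y - z) / (y - x).
have -> : l * x + (1 - l) * y = y - l * (y - x) by ring.
by rewrite /l divfK // opprB addrC subrK.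
Qed.

Lemma fuzzy_betw u x y z : x <= z <= y -> Num.min (u x) (u y) <= u z.
Proof. by move=> /betw_comb [l [hl ->]]; apply: fuzzy_convex. Qed.

Lemma closure_sub_itv S a b : S `<=` [set x | a <= x <= b] ->
  closure S `<=` [set x | a <= x <= b].
Proof.
move=> h z /closureR cl /=; apply/andP; split; rewrite leNgt; apply/negP => hz.
  have [y [Sy hy]] := cl (a - z) ltac:(by rewrite subr_gt0).
  have /andP[ay _] := h _ Sy.
  by move: hy; rewrite distrC ltr_norml => /andP[_ h2]; lra.
have [y [Sy hy]] := cl (z - b) ltac:(by rewrite subr_gt0).
have /andP[_ yb] := h _ Sy.
by move: hy; rewrite ltr_norml => /andP[_ h2]; lra.
Qed.

Lemma level_closed u r : 0 <= r -> closure (level u r) `<=` level u r.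
Proof.
rewrite le_eqVlt => /orP[/eqP<-|r0]; first by rewrite level0; exact: closed_closure.
rewrite levelP // => x /closureR cl /=; rewrite leNgt; apply/negP => hx.
have [d d0 hd] := @fuzzy_usc _ u x (r - u x) ltac:(by rewrite subr_gt0; exact: hx).
have [y [ry hy]] := cl d d0; move: ry => /= ry.
have := hd y; rewrite distrC => /(_ hy); rewrite addrC subrK ltNge ry //.
Qed.

Lemma level_convex u r x y z : 0 <= r -> level u r x -> level u r y ->
  x <= z <= y -> level u r z.
Proof.
rewrite le_eqVlt => /orP[/eqP<-|r0]; last first.
  rewrite !levelP //= => hx hy /(fuzzy_betw u) h.
  by apply: le_trans h; rewrite le_min hx hy.
rewrite !level0 => /closureR hx /closureR hy /andP[xz zy].
have [->|nxz] := eqVneq z x; first exact/closureR.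
have [->|nzy] := eqVneq z y; first exact/closureR.
have xz' : 0 < z - x by rewrite subr_gt0 lt_neqAle eq_sym nxz.
have zy' : 0 < y - z by rewrite subr_gt0 lt_neqAle nzy.
have [x' [sx hx']] := hx _ xz'; have [y' [sy hy']] := hy _ zy'.
apply: subset_closure => /=.
have : x' <= z <= y'.
  by move: hx' hy'; rewrite !ltr_norml; case/andP=> ? ? /andP[? ?]; apply/andP; split; lra.
move/(fuzzy_betw u); apply: lt_le_trans; by rewrite lt_min sx sy.
Qed.

Lemma level_bound u : exists M, forall r x, 0 <= r -> level u r x -> `|x| <= M.
Proof.
have [M hM] := level0_bounded u; exists M => r x r0 hx; apply: hM.
exact: level_sub0 hx.
Qed.

Lemma level_has_lb u r : 0 <= r -> has_lbound (level u r).
Proof.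
move=> r0; have [M hM] := level_bound u; exists (- M) => x hx.
by have := hM _ _ r0 hx; rewrite ler_norml => /andP[].
Qed.

Lemma level_has_ub u r : 0 <= r -> has_ubound (level u r).
Proof.
move=> r0; have [M hM] := level_bound u; exists M => x hx.
by have := hM _ _ r0 hx; rewrite ler_norml => /andP[].
Qed.

Lemma flow_in u r : 0 <= r <= 1 -> level u r (flow u r).
Proof.
move=> hr; have r0 : 0 <= r by case/andP: hr.
apply: level_closed => //; apply/closureR => e e0.
have [y Ly ye] := inf_adherent e0 (conj (level_ne u hr) (level_has_lb u r0)).
exists y; split => //; rewrite /flow distrC ger0_norm.
  by rewrite ltrBlDl.
by rewrite subr_ge0; apply: ge_inf => //; exact: level_has_lb.
Qed.

Lemma fupp_in u r : 0 <= r <= 1 -> level u r (fupp u r).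
Proof.
move=> hr; have r0 : 0 <= r by case/andP: hr.
apply: level_closed => //; apply/closureR => e e0.
have hs : has_sup (level u r) by split; [exact: level_ne|exact: level_has_ub].
have [y Ly ye] := sup_adherent e0 hs.
exists y; split => //; rewrite /fupp ger0_norm.
  by rewrite ltrBlDr addrC -ltrBlDr.
by rewrite subr_ge0; apply: sup_upper_bound.
Qed.

Lemma level_itv u r : 0 <= r <= 1 ->
  level u r = [set x | flow u r <= x <= fupp u r].
Proof.
move=> hr; have r0 : 0 <= r by case/andP: hr.
apply/seteqP; split => x /=.
  move=> hx; apply/andP; split.
    by apply: ge_inf => //; exact: level_has_lb.
  apply: sup_upper_bound => //; split; [exact: level_ne|exact: level_has_ub].
by move=> hx; exact: (level_convex r0 (flow_in u hr) (fupp_in u hr) hx).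
Qed.

Lemma flow_le_fupp u r : 0 <= r <= 1 -> flow u r <= fupp u r.
Proof.
move=> hr; have := fupp_in u hr; rewrite level_itv // => /andP[].
done.
Qed.

Lemma level_mono u r s : 0 <= s <= r -> level u r `<=` level u s.
Proof.
case/andP=> s0 sr x; have r0 := le_trans s0 sr.
move: s0; rewrite le_eqVlt => /orP[/eqP<-|s0]; first exact: level_sub0.
by rewrite !levelP ?(lt_le_trans s0 sr) //= => /(le_trans sr).
Qed.

Lemma flow_mono u r s : 0 <= s -> s <= r -> r <= 1 -> flow u s <= flow u r.
Proof.
move=> s0 sr r1; have hr : 0 <= r <= 1 by rewrite r1 (le_trans s0 sr).
have hs : 0 <= s <= 1 by rewrite s0 (le_trans sr r1).
have := @level_mono u r s ltac:(by rewrite s0 sr) _ (flow_in u hr).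
by rewrite level_itv // => /andP[].
Qed.

Lemma fupp_mono u r s : 0 <= s -> s <= r -> r <= 1 -> fupp u r <= fupp u s.
Proof.
move=> s0 sr r1; have hr : 0 <= r <= 1 by rewrite r1 (le_trans s0 sr).
have hs : 0 <= s <= 1 by rewrite s0 (le_trans sr r1).
have := @level_mono u r s ltac:(by rewrite s0 sr) _ (fupp_in u hr).
by rewrite level_itv // => /andP[].
Qed.

End D.


Section E.
Variable R : realType.
Implicit Types (u v w : fuzzy R) (S : set R).

Lemma flow_lcont u r e : 0 < r -> r <= 1 -> 0 < e ->
  exists s, (0 < s < r) /\ flow u r - e < flow u s.
Proof.
move=> r0 r1 e0; apply: contrapT => H.
have hr : 0 <= r <= 1 by rewrite ltW.
set p := flow u r - e.
have Lp : level u r p.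
  rewrite levelP //=; rewrite leNgt; apply/negP => hp.
  set s := (u p + r) / 2.
  have s0 : 0 < s by have := fuzzy_ge0 u p; rewrite /s; lra.
  have sr : s < r by rewrite /s; lra.
  have hs : 0 <= s <= 1 by apply/andP; split; lra.
  have fs : flow u s <= p.
    rewrite leNgt; apply/negP => h; apply: H; exists s; split => //.
    by rewrite s0 sr.
  have ps : p <= fupp u s.
    have := flow_le_fupp u hr; have := fupp_mono u (ltW s0) (ltW sr) r1.
    rewrite /p; lra.
  have : level u s p by rewrite level_itv //= fs ps.
  by rewrite levelP //= /s; lra.
move: Lp; rewrite level_itv //= => /andP[+ _]; rewrite /p; lra.
Qed.

Lemma fupp_lcont u r e : 0 < r -> r <= 1 -> 0 < e ->
  exists s, (0 < s < r) /\ fupp u s < fupp u r + e.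
Proof.
move=> r0 r1 e0; apply: contrapT => H.
have hr : 0 <= r <= 1 by rewrite ltW.
set p := fupp u r + e.
have Lp : level u r p.
  rewrite levelP //=; rewrite leNgt; apply/negP => hp.
  set s := (u p + r) / 2.
  have s0 : 0 < s by have := fuzzy_ge0 u p; rewrite /s; lra.
  have sr : s < r by rewrite /s; lra.
  have hs : 0 <= s <= 1 by apply/andP; split; lra.
  have fs : p <= fupp u s.
    rewrite leNgt; apply/negP => h; apply: H; exists s; split => //.
    by rewrite s0 sr.
  have ps : flow u s <= p.
    have := flow_le_fupp u hr; have := flow_mono u (ltW s0) (ltW sr) r1.
    rewrite /p; lra.
  have : level u s p by rewrite level_itv //= fs ps.
  by rewrite levelP //= /s; lra.
move: Lp; rewrite level_itv //= => /andP[_]; rewrite /p; lra.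
Qed.

Definition Wset u v r := [set z | flow u r + flow v r <= z <= fupp u r + fupp v r].

Lemma Wset_mono u v r s z : 0 <= s -> s <= r -> r <= 1 -> Wset u v r z -> Wset u v s z.
Proof.
move=> s0 sr r1; rewrite /Wset /= => /andP[h1 h2].
have := flow_mono u s0 sr r1; have := flow_mono v s0 sr r1.
have := fupp_mono u s0 sr r1; have := fupp_mono v s0 sr r1.
move=> *; apply/andP; split; lra.
Qed.

Lemma Wset_lcont u v r z : 0 < r -> r <= 1 ->
  (forall s, 0 < s < r -> Wset u v s z) -> Wset u v r z.
Proof.
move=> r0 r1 h; rewrite /Wset /=; apply/andP; split.
  rewrite leNgt; apply/negP => hz.
  set e := (flow u r + flow v r - z) / 2.
  have e0 : 0 < e by rewrite /e; lra.
  have [s1 [/andP[s10 s1r] h1]] := flow_lcont u r0 r1 e0.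
  have [s2 [/andP[s20 s2r] h2]] := flow_lcont v r0 r1 e0.
  set t := Num.max s1 s2.
  have t0 : 0 < t by rewrite lt_max s10.
  have tr : t < r by rewrite gt_max s1r s2r.
  have ht1 : s1 <= t by rewrite le_max lexx.
  have ht2 : s2 <= t by rewrite le_max lexx orbT.
  have m1 := flow_mono u (ltW s10) ht1 (ltW (lt_le_trans tr r1)).
  have m2 := flow_mono v (ltW s20) ht2 (ltW (lt_le_trans tr r1)).
  have /andP[+ _] := h t ltac:(by rewrite t0 tr).
  rewrite /e in h1 h2; move: m1 m2 h1 h2; lra.
rewrite leNgt; apply/negP => hz.
set e := (z - (fupp u r + fupp v r)) / 2.
have e0 : 0 < e by rewrite /e; lra.
have [s1 [/andP[s10 s1r] h1]] := fupp_lcont u r0 r1 e0.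
have [s2 [/andP[s20 s2r] h2]] := fupp_lcont v r0 r1 e0.
set t := Num.max s1 s2.
have t0 : 0 < t by rewrite lt_max s10.
have tr : t < r by rewrite gt_max s1r s2r.
have ht1 : s1 <= t by rewrite le_max lexx.
have ht2 : s2 <= t by rewrite le_max lexx orbT.
have m1 := fupp_mono u (ltW s10) ht1 (ltW (lt_le_trans tr r1)).
have m2 := fupp_mono v (ltW s20) ht2 (ltW (lt_le_trans tr r1)).
have /andP[_ +] := h t ltac:(by rewrite t0 tr).
rewrite /e in h1 h2; move: m1 m2 h1 h2; lra.
Qed.

Lemma sum_itv (a b c d : R) : a <= b -> c <= d ->
  [set x + y | x in [set x | a <= x <= b] & y in [set y | c <= y <= d]] =
  [set z | a + c <= z <= b + d].
Proof.
move=> ab cd; apply/seteqP; split => z /=.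
  by case=> x /andP[? ?] [y /andP[? ?] <-]; apply/andP; split; lra.
case/andP=> h1 h2; case: (lerP b (z - c)) => hm.
  exists b; first by apply/andP; split; lra.
  by exists (z - b); [apply/andP; split; lra|rewrite addrC subrK].
exists (z - c); first by apply/andP; split; lra.
by exists c; [apply/andP; split; lra|rewrite subrK].
Qed.

Lemma level_sum u v r : 0 <= r <= 1 ->
  [set x + y | x in level u r & y in level v r] = Wset u v r.
Proof.
by move=> hr; rewrite !level_itv // sum_itv //; apply: flow_le_fupp.
Qed.

End E.


Section F.
Variable R : realType.
Implicit Types (u v w : fuzzy R) (S : set R).

Definition wset u v z := [set r : R | (0 < r <= 1) /\ Wset u v r z].
Definition wfun u v z := sup (wset u v z).

Lemma wfun_ge0 u v z : 0 <= wfun u v z.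
Proof. by apply: sup_ge0' => r [/andP[/ltW]]. Qed.

Lemma wfun_le1 u v z : wfun u v z <= 1.
Proof.
rewrite /wfun; case: (pselect (wset u v z !=set0)) => [ne|ne].
  by apply: ge_sup => // r [/andP[]].
have -> : wset u v z = set0.
  by apply/seteqP; split => r // hr; apply: ne; exists r.
by rewrite sup0 ler01.
Qed.

Lemma wfun_level u v r z : 0 < r <= 1 -> (r <= wfun u v z <-> Wset u v r z).
Proof.
move=> /andP[r0 r1]; split => [h|h]; last first.
  apply: sup_upper_bound; last by split => //; rewrite r0.
  by split; [exists r; split => //; rewrite r0|exists 1 => s [/andP[]]].
apply: Wset_lcont => // s /andP[s0 sr].
have ne : wset u v z !=set0.
  apply: contrapT => ne; move: h; rewrite /wfun.
  have -> : wset u v z = set0.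
    by apply/seteqP; split => t // ht; apply: ne; exists t.
  by rewrite sup0 leNgt r0.
have [t [/andP[t0 t1] Wt] st] := sup_gt ne (lt_le_trans sr h).
exact: Wset_mono (ltW s0) (ltW st) t1 Wt.
Qed.

Lemma Wset_closed u v r S : 0 <= r <= 1 -> S `<=` Wset u v r ->
  closure S `<=` Wset u v r.
Proof. by move=> hr hS; apply: closure_sub_itv. Qed.

Lemma supp_wfun u v :
  closure [set z | 0 < wfun u v z] = Wset u v 0.
Proof.
apply/seteqP; split.
  apply: Wset_closed; first by rewrite lexx ler01.
  move=> z /= hz.
  have hz' : 0 < wfun u v z <= 1 by rewrite hz wfun_le1.
  have := (wfun_level u v z hz').1 (lexx _).
  by move=> H; exact: (Wset_mono (lexx 0) (wfun_ge0 u v z) (wfun_le1 u v z) H).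
move=> z; rewrite -level_sum ?lexx ?ler01 // !level0.
case=> x /closureR hx [y /closureR hy <-]; apply/closureR => e e0.
have e20 : 0 < e / 2 by rewrite divr_gt0.
have [x' [/= ux hx']] := hx _ e20; have [y' [/= vy hy']] := hy _ e20.
exists (x' + y'); split.
  set m := Num.min (u x') (v y').
  have m0 : 0 < m by rewrite lt_min ux vy.
  have m1 : m <= 1 by rewrite ge_min fuzzy_le1.
  have hm : 0 < m <= 1 by rewrite m0 m1.
  rewrite /=; apply: (lt_le_trans m0 _); apply/(wfun_level _ _ _ hm).
  rewrite -level_sum; last by rewrite (ltW m0) m1.
  exists x'.
    by rewrite levelP //= ge_min lexx.
  by exists y' => //; rewrite levelP //= ge_min lexx orbT.
have -> : x + y - (x' + y') = (x - x') + (y - y') by rewrite opprD addrACA.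
apply: le_lt_trans (ler_normD _ _) _.
by rewrite (splitr e) ltrD.
Qed.

Lemma wfun_fuzzy u v : is_fuzzy (wfun u v).
Proof.
split.
- by move=> z; rewrite wfun_ge0 wfun_le1.
- exists (flow u 1 + flow v 1); apply/eqP; rewrite eq_le wfun_le1 /=.
  apply/(wfun_level _ _ _ (r:=1)); first by rewrite ltr01 lexx.
  rewrite /Wset /= lexx /= lerD //; apply: flow_le_fupp; by rewrite ler01 lexx.
- move=> x y l hl; set m := Num.min _ _.
  case: (lerP m 0) => [m0|m0]; first exact: le_trans m0 (wfun_ge0 _ _ _).
  have hm : 0 < m <= 1 by rewrite m0 ge_min wfun_le1.
  apply/(wfun_level _ _ _ hm).
  have /(wfun_level _ _ _ hm) : m <= wfun u v x by rewrite ge_min lexx.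
  have /(wfun_level _ _ _ hm) : m <= wfun u v y by rewrite ge_min lexx orbT.
  rewrite /Wset /= => /andP[y1 y2] /andP[x1 x2]; case/andP: hl => l0 l1.
  apply/andP; split; nra.
- move=> x e e0; set r := wfun u v x + e.
  case: (ltrP 1 r) => [r1|r1].
    exists 1 => // y _; exact: le_lt_trans (wfun_le1 _ _ _) r1.
  have r0 : 0 < r by rewrite /r; have := wfun_ge0 u v x; lra.
  have hr : 0 < r <= 1 by rewrite r0 r1.
  have nW : ~ Wset u v r x.
    by move/(wfun_level _ _ _ hr); rewrite /r leNgt ltrDl e0.
  have key : forall y, ~ Wset u v r y -> wfun u v y < r.
    by move=> y nWy; rewrite ltNge; apply/negP => /(wfun_level _ _ _ hr).
  move: nW; rewrite /Wset /= => /negP; rewrite negb_and -!ltNge => /orP[h|h].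
    exists (flow u r + flow v r - x); first by rewrite subr_gt0.
    move=> y hy; apply: key; rewrite /Wset /= => /andP[h1 _].
    by move: hy; rewrite ltr_norml => /andP[_ h2]; lra.
  exists (x - (fupp u r + fupp v r)); first by rewrite subr_gt0.
  move=> y hy; apply: key; rewrite /Wset /= => /andP[_ h1].
  by move: hy; rewrite ltr_norml => /andP[h2 _]; lra.
- rewrite supp_wfun.
  have -> : Wset u v 0 = `[flow u 0 + flow v 0, fupp u 0 + fupp v 0]%classic.
    by apply/seteqP; split => z; rewrite /= in_itv.
  exact: segment_compact.
Qed.

Definition fsum u v : fuzzy R := Fuzzy (wfun_fuzzy u v).

Lemma level_fsum u v r : 0 <= r <= 1 ->
  level (fsum u v) r = [set x + y | x in level u r & y in level v r].
Proof.
move=> hr; rewrite level_sum //; case/andP: hr; rewrite le_eqVlt => /orP[/eqP<-|r0] r1.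
  by rewrite level0 /= supp_wfun.
rewrite levelP //; apply/seteqP; split => z /=.
  by move/(wfun_level _ _ _ (r := r)); rewrite r0 r1 => /(_ isT).
by move=> h; apply/(wfun_level _ _ _ (r := r)) => //; rewrite r0 r1.
Qed.

Lemma level_fadd u v r : 0 <= r <= 1 ->
  level (fadd u v) r = [set x + y | x in level u r & y in level v r].
Proof.
rewrite /fadd; case: pselect => [H|nH]; last first.
  by exfalso; apply: nH; exists (fsum u v) => s hs; apply: level_fsum.
by case: (cid H) => w /= hw; apply: hw.
Qed.

End F.


Section G.
Variable R : realType.
Implicit Types (u v w : fuzzy R) (S : set R).

Definition fDset u v := [set Num.max `|flow u r - flow v r| `|fupp u r - fupp v r|
      | r in `[(0:R), 1]].


Lemma flow_bound u : exists M, forall r, 0 <= r <= 1 -> `|flow u r| <= M /\ `|fupp u r| <= M.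
Proof.
have [M hM] := level_bound u; exists M => r hr; have r0 : 0 <= r by case/andP: hr.
by split; apply: (hM r) => //; [apply: flow_in|apply: fupp_in].
Qed.

Lemma fDset_sup u v : has_sup (fDset u v).
Proof.
split; first by exists (Num.max `|flow u 0 - flow v 0| `|fupp u 0 - fupp v 0|), 0 => //; rewrite /= in_itv /= lexx ler01.
have [Mu hu] := flow_bound u; have [Mv hv] := flow_bound v.
exists (Mu + Mv) => y [r]; rewrite /= in_itv /= => hr <-.
have [h1 h2] := hu r hr; have [h3 h4] := hv r hr.
rewrite ge_max; apply/andP; split; apply: le_trans (ler_normB _ _) _; exact: lerD.
Qed.

Lemma fD_ub u v r : 0 <= r <= 1 ->
  `|flow u r - flow v r| <= fD u v /\ `|fupp u r - fupp v r| <= fD u v.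
Proof.
move=> hr; have : Num.max `|flow u r - flow v r| `|fupp u r - fupp v r| <= fD u v.
  by apply: sup_upper_bound; [exact: fDset_sup|exists r => //; rewrite /= in_itv /=].
by rewrite ge_max => /andP[].
Qed.

Lemma fD_triangle u v w : fD u w <= fD u v + fD v w.
Proof.
apply: ge_sup; first by exists (Num.max `|flow u 0 - flow w 0| `|fupp u 0 - fupp w 0|), 0 => //; rewrite /= in_itv /= lexx ler01.
move=> y [r]; rewrite /= in_itv /= => hr <-.
have [h1 h2] := fD_ub u v hr; have [h3 h4] := fD_ub v w hr.
rewrite ge_max; apply/andP; split.
  by apply: le_trans (ler_distD (flow v r) _ _) _; exact: lerD.
by apply: le_trans (ler_distD (fupp v r) _ _) _; exact: lerD.
Qed.

Lemma itv_eq (a b c d : R) : a <= b -> c <= d ->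
  [set z | a <= z <= b] = [set z | c <= z <= d] -> a = c /\ b = d.
Proof.
move=> ab cd e.
have ha : [set z | c <= z <= d] a by rewrite -e /= lexx ab.
have hb : [set z | c <= z <= d] b by rewrite -e /= lexx ab.
have hc : [set z | a <= z <= b] c by rewrite e /= lexx cd.
have hd : [set z | a <= z <= b] d by rewrite e /= lexx cd.
move: ha hb hc hd => /= /andP[? ?] /andP[? ?] /andP[? ?] /andP[? ?].
by split; apply/eqP; rewrite eq_le; apply/andP; split.
Qed.

Lemma flow_fadd u v r : 0 <= r <= 1 ->
  flow (fadd u v) r = flow u r + flow v r /\ fupp (fadd u v) r = fupp u r + fupp v r.
Proof.
move=> hr; have := level_fadd u v hr; rewrite level_sum // level_itv //.
move/itv_eq => [||->->//]; first exact: flow_le_fupp.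
by rewrite /Wset; apply: lerD; apply: flow_le_fupp.
Qed.

Lemma level_eq_flow u v : (forall r, 0 <= r <= 1 -> flow u r = flow v r /\ fupp u r = fupp v r) -> u = v.
Proof.
move=> h; apply: fuzzy_ext => r /andP[r0 r1]; have hr : 0 <= r <= 1 by rewrite ltW.
by rewrite !level_itv //; have [-> ->] := h r hr.
Qed.

Lemma fD_eq0 u v : fD u v = 0 -> u = v.
Proof.
move=> h; apply: level_eq_flow => r hr; have [h1 h2] := fD_ub u v hr.
by move: h1 h2; rewrite h !normr_le0 !subr_eq0 => /eqP-> /eqP->.
Qed.

Lemma fadd_cancel u w w' : fadd u w = fadd u w' -> w = w'.
Proof.
move=> e; apply: level_eq_flow => r hr.
have [h1 h2] := flow_fadd u w hr; have [h3 h4] := flow_fadd u w' hr.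
by split; [apply: (addrI (flow u r)); rewrite -h1 -h3 e|apply: (addrI (fupp u r)); rewrite -h2 -h4 e].
Qed.

Lemma fscale_fadd c u v : fscale c (fadd u v) = fadd (fscale c u) (fscale c v).
Proof.
apply: fuzzy_ext => r /andP[r0 r1]; have hr : 0 <= r <= 1 by rewrite ltW.
rewrite level_fscale // !level_fadd // !level_fscale //.
apply/seteqP; split => z /=.
  case=> _ [x hx [y hy <-]] <-; exists (c * x); first by exists x.
  by exists (c * y); [exists y|rewrite mulrDr].
case=> _ [x hx <-] [_ [y hy <-] <-]; exists (x + y); last by rewrite mulrDr.
by exists x => //; exists y.
Qed.

Lemma fadd_fzero u : fadd u (fzero R) = u.
Proof.
apply: fuzzy_ext => r /andP[r0 r1]; have hr : 0 <= r <= 1 by rewrite ltW.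
rewrite level_fadd // level_fzero //; apply/seteqP; split => z /=.
  by case=> x hx [y -> <-]; rewrite addr0.
by move=> hz; exists z => //; exists 0; rewrite ?addr0.
Qed.

End G.


Section H.
Variable R : realType.
Implicit Types (u v w g : fuzzy R) (f : R -> fuzzy R).
Variables (a b : R).
Hypothesis ab : a < b.

Lemma Hderiv_uniq f t g g' : in_ab a b t -> Hderiv_at a b f t g ->
  Hderiv_at a b f t g' -> g = g'.
Proof.
move=> /andP[ta tb] hg hg'; apply: fD_eq0; apply/eqP; rewrite eq_le fD_ge0 andbT.
rewrite leNgt; apply/negP => D0.
set e := fD g g' / 4; have e0 : 0 < e by rewrite /e divr_gt0.
have [d1 d10 h1] := hg e e0; have [d2 d20 h2] := hg' e e0.
set h := Num.min (Num.min d1 d2) (b - a) / 2.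
have hm : 0 < Num.min (Num.min d1 d2) (b - a) by rewrite !lt_min d10 d20 subr_gt0 ab.
have h0 : 0 < h by rewrite /h divr_gt0.
have hd1 : h < d1.
  have : Num.min (Num.min d1 d2) (b - a) <= d1 by rewrite !ge_min lexx.
  by rewrite /h; lra.
have hd2 : h < d2.
  have : Num.min (Num.min d1 d2) (b - a) <= d2 by rewrite !ge_min lexx orbT.
  by rewrite /h; lra.
have hba : 2 * h <= b - a.
  have : Num.min (Num.min d1 d2) (b - a) <= b - a by rewrite ge_min lexx orbT.
  by rewrite /h; lra.
have [H1 H1'] := h1 h ltac:(by rewrite h0 hd1).
have [H2 H2'] := h2 h ltac:(by rewrite h0 hd2).
have key : forall X, fD X g < e -> fD X g' < e -> False.
  move=> X hX hX'; have := fD_triangle g X g'; rewrite [fD g X]fDC.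
  by rewrite /e in hX hX'; lra.
case: (lerP (t + h) b) => th.
  have [w1 e1 d1'] := H1 th; have [w2 e2 d2'] := H2 th.
  have ew : w1 = w2 by apply: (@fadd_cancel _ (f t)); rewrite -e1 -e2.
  by subst w2; exact: key d1' d2'.
have th' : a <= t - h by lra.
have [w1 e1 d1'] := H1' th'; have [w2 e2 d2'] := H2' th'.
have ew : w1 = w2 by apply: (@fadd_cancel _ (f (t - h))); rewrite -e1 -e2.
by subst w2; exact: key d1' d2'.
Qed.

Lemma fscale_comm c k w : fscale k (fscale c w) = fscale c (fscale k w).
Proof. by rewrite !fscaleA mulrC. Qed.

Lemma Hderiv_scale f t g c : Hderiv_at a b f t g ->
  Hderiv_at a b (fun s => fscale c (f s)) t (fscale c g).
Proof.
move=> hg e e0.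
have c1 : 0 < `|c| + 1 by rewrite ltr_wpDl.
set e' := e / (`|c| + 1); have e'0 : 0 < e' by rewrite divr_gt0.
have ce : `|c| * e' < e.
  rewrite /e' mulrA ltr_pdivrMr // mulrC ltr_pM2l //; lra.
have [d d0 hd] := hg e' e'0; exists d => // h hh.
have [H1 H2] := hd h hh; split.
  move=> th; have [w ew dw] := H1 th; exists (fscale c w).
    by rewrite ew fscale_fadd.
  rewrite fscale_comm fD_fscale; apply: le_lt_trans ce.
  by apply: ler_wpM2l => //; apply: ltW.
move=> th; have [w ew dw] := H2 th; exists (fscale c w).
  by rewrite ew fscale_fadd.
rewrite fscale_comm fD_fscale; apply: le_lt_trans ce.
by apply: ler_wpM2l => //; apply: ltW.
Qed.

Lemma Hderiv_fzero t : Hderiv_at a b (fun _ => fzero R) t (fzero R).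
Proof.
move=> e e0; exists 1 => // h _; split => _; exists (fzero R);
  rewrite ?fadd_fzero ?fscale_fzero ?fDxx //.
Qed.

Lemma hderiv_fzero t : hderiv a b (fun _ => fzero R) t = fzero R.
Proof.
rewrite /hderiv; case: pselect => [H|//]; case: (cid H) => g /= [ht hg].
exact: (Hderiv_uniq ht hg (Hderiv_fzero t)).
Qed.

Lemma hderiv_scale f c t :
  hderiv a b (fun s => fscale c (f s)) t = fscale c (hderiv a b f t).
Proof.
have [->|c0] := eqVneq c 0.
  rewrite fscale0; have -> : (fun s => fscale 0 (f s)) = (fun _ => fzero R).
    by apply: funext => s; rewrite fscale0.
  exact: hderiv_fzero.
rewrite /hderiv; case: pselect => [H|nH]; case: pselect => [H'|nH'].
- case: (cid H) => g1 /= [ht hg1]; case: (cid H') => g0 /= [_ hg0].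
  exact: (Hderiv_uniq ht hg1 (Hderiv_scale c hg0)).
- exfalso; apply: nH'; case: H => g1 [ht hg1]; exists (fscale c^-1 g1); split => //.
  have := Hderiv_scale c^-1 hg1.
  have -> : (fun s => fscale c^-1 (fscale c (f s))) = f.
    by apply: funext => s; rewrite fscaleA mulVf // fscale1.
  by [].
- exfalso; apply: nH; case: H' => g0 [ht hg0]; exists (fscale c g0); split => //.
  exact: Hderiv_scale.
- by rewrite fscale_fzero.
Qed.

Lemma iter_hderiv_scale f c i :
  iter i (hderiv a b) (fun s => fscale c (f s)) =
  (fun s => fscale c (iter i (hderiv a b) f s)).
Proof.
elim: i => [//|i IH]; rewrite !iterS IH; apply: funext => t.
exact: hderiv_scale.
Qed.

Lemma iter_hderiv_fzero i :
  iter i (hderiv a b) (fun _ => fzero R) = (fun _ => fzero R).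
Proof.
elim: i => [//|i IH]; rewrite iterS IH; apply: funext => t.
exact: hderiv_fzero.
Qed.

End H.


Section I.
Variable R : realType.
Implicit Types (u v w g : fuzzy R).

Lemma fD_scale_lt c u v e : 0 < e -> fD u v < e / (`|c| + 1) ->
  fD (fscale c u) (fscale c v) < e.
Proof.
move=> e0 h; have c1 : 0 < `|c| + 1 by rewrite ltr_wpDl.
rewrite fD_fscale; apply: (le_lt_trans (y := `|c| * (e / (`|c| + 1)))).
  by apply: ler_wpM2l => //; apply: ltW.
rewrite mulrA ltr_pdivrMr // mulrC ltr_pM2l //; lra.
Qed.

Lemma fDstar_scale a b c (F : R -> fuzzy R) :
  fDstar a b (fun _ => fzero R) (fun t => fscale c (F t)) =
  `|c| * fDstar a b (fun _ => fzero R) F.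
Proof.
rewrite /fDstar -supZ_img //; apply: eq_sup_img => t _; exact: fD0_fscale.
Qed.

Lemma fD_fzero_scale c u : fD (fscale c u) (fzero R) = `|c| * fD u (fzero R).
Proof. by rewrite -fD_fscale fscale_fzero. Qed.

Definition good (s : fspace R) :=
  [/\ smem (szero s),
      (forall (c : R) (x : carrier s), smem x -> smem (sscale c x)),
      (forall (c : R) (x : carrier s), smem x -> snorm (sscale c x) = `|c| * snorm x),
      (forall x : carrier s, sscale 0 x = szero s) &
      (forall x : carrier s, 0 <= snorm x)].

Lemma fcont_fzero a b : fcont_on a b (fun _ => fzero R).
Proof. by move=> t _ e e0; exists 1 => // s _ _; rewrite fDxx. Qed.

Lemma fcont_scale a b c (F : R -> fuzzy R) : fcont_on a b F ->
  fcont_on a b (fun t => fscale c (F t)).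
Proof.
move=> cf t ht e e0; have c1 : 0 < `|c| + 1 by rewrite ltr_wpDl.
have [d d0 hd] := cf t ht (e / (`|c| + 1)) (divr_gt0 e0 c1).
by exists d => // s hs hst; apply: fD_scale_lt => //; exact: hd.
Qed.

Lemma zero_out_scale a b c (F : R -> fuzzy R) : zero_out a b F ->
  zero_out a b (fun t => fscale c (F t)).
Proof. by move=> zf t nt; rewrite /= zf // fscale_fzero. Qed.

Lemma good_RF : good (S_RF R).
Proof.
split => //.
- by move=> c x _; exact: fD0_fscale.
- by move=> x; exact: fscale0.
- by move=> x; exact: fD_ge0.
Qed.

Lemma good_C a b : good (S_C a b).
Proof.
split.
- by split; [move=> t _|exact: fcont_fzero].
- by move=> c f [zf cf]; split; [exact: zero_out_scale|exact: fcont_scale].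
- by move=> c f _; rewrite /snorm /=; exact: fDstar_scale.
- by move=> f; apply: funext => t /=; exact: fscale0.
- by move=> f; apply: sup_ge0' => _ [t _ <-]; exact: fD_ge0.
Qed.

Lemma good_seq_norm c (x : nat -> fuzzy R) :
  mu_sup (fun _ => fzero R) (fun n => fscale c (x n)) =
  `|c| * mu_sup (fun _ => fzero R) x.
Proof.
rewrite /mu_sup -supZ_img //; apply: eq_sup_img => n _; exact: fD0_fscale.
Qed.

Lemma good_m : good (S_m R).
Proof.
split.
- by exists 0 => n; rewrite fDxx.
- move=> c x [M hM]; exists (`|c| * M) => n /=; rewrite fD_fzero_scale.
  by apply: ler_wpM2l => //; exact: hM.
- by move=> c x _; rewrite /snorm /=; exact: good_seq_norm.
- by move=> x; apply: funext => n /=; exact: fscale0.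
- by move=> x; apply: sup_ge0' => _ [n _ <-]; exact: fD_ge0.
Qed.

Lemma good_c : good (S_c R).
Proof.
split.
- by exists (fzero R) => e e0; exists 0%N => n _; rewrite fDxx.
- move=> c x [l hl]; exists (fscale c l) => e e0.
  have c1 : 0 < `|c| + 1 by rewrite ltr_wpDl.
  have [N hN] := hl _ (divr_gt0 e0 c1); exists N => n hn /=.
  by apply: fD_scale_lt => //; exact: hN.
- by move=> c x _; rewrite /snorm /=; exact: good_seq_norm.
- by move=> x; apply: funext => n /=; exact: fscale0.
- by move=> x; apply: sup_ge0' => _ [n _ <-]; exact: fD_ge0.
Qed.

Lemma good_c0 : good (S_c0 R).
Proof.
split.
- by move=> e e0; exists 0%N => n _; rewrite fDxx.
- move=> c x hl e e0.
  have c1 : 0 < `|c| + 1 by rewrite ltr_wpDl.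
  have [N hN] := hl _ (divr_gt0 e0 c1); exists N => n hn /=.
  by rewrite -(fscale_fzero c); apply: fD_scale_lt => //; exact: hN.
- by move=> c x _; rewrite /snorm /=; exact: good_seq_norm.
- by move=> x; apply: funext => n /=; exact: fscale0.
- by move=> x; apply: sup_ge0' => _ [n _ <-]; exact: fD_ge0.
Qed.

Lemma good_Cp a b p : a < b -> good (S_Cp a b p).
Proof.
move=> ab; split.
- split => [t _ //|i hi]; rewrite iter_hderiv_fzero //; split.
    exact: fcont_fzero.
  by move=> _ t _; exists (fzero R); exact: Hderiv_fzero.
- move=> c f [zf hf]; split; first exact: zero_out_scale.
  move=> i hi; rewrite /= iter_hderiv_scale //; have [cf df] := hf i hi; split.
    exact: fcont_scale.
  by move=> ip t ht; have [g hg] := df ip t ht; exists (fscale c g); exact: Hderiv_scale.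
- move=> c f _; rewrite /snorm /= big_distrr /=; apply: eq_bigr => i _.
  by rewrite !iter_hderiv_fzero // iter_hderiv_scale // fDstar_scale.
- by move=> f; apply: funext => t /=; exact: fscale0.
- move=> f; rewrite /snorm /=; apply: sumr_ge0 => i _.
  by apply: sup_ge0' => _ [t _ <-]; exact: fD_ge0.
Qed.

End I.


Section J.
Variable R : realType.
Implicit Types (u v w g : fuzzy R).

Lemma powR_scale (k p X : R) : 0 < p -> 0 <= k -> 0 <= X ->
  (k `^ p * X) `^ p^-1 = k * X `^ p^-1.
Proof.
move=> p0 k0 X0; rewrite powRM ?powR_ge0 // -powRrM mulfV ?gt_eqF // powRr1 //.
Qed.

Lemma Lp_aux (D : set R) (mD : measurable D) (F G H : R -> R) (k p : R) : 0 < p ->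
  lebesgue_measure.-integrable D (fun t => ((H t) `^ p)%:E) -> (forall t, 0 <= H t) ->
  (forall t, F t = k * H t) -> (forall t, G t = H t) -> 0 <= k ->
  fine (\int[lebesgue_measure]_(t in D) ((F t) `^ p)%:E) `^ p^-1 =
  k * fine (\int[lebesgue_measure]_(t in D) ((G t) `^ p)%:E) `^ p^-1.
Proof.
move=> p0 iH H0 eF eG k0.
have E1 : (\int[lebesgue_measure]_(t in D) ((F t) `^ p)%:E =
    (k `^ p)%:E * \int[lebesgue_measure]_(t in D) ((H t) `^ p)%:E)%E.
  rewrite -integralZl //; apply: eq_integral => t _.
  by rewrite eF powRM // EFinM.
have E2 : (\int[lebesgue_measure]_(t in D) ((G t) `^ p)%:E =
    \int[lebesgue_measure]_(t in D) ((H t) `^ p)%:E)%E.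
  by apply: eq_integral => t _; rewrite eG.
rewrite E1 E2 fineM; last exact: integrable_fin_num.
  apply: powR_scale => //.
  apply: fine_ge0; apply: integral_ge0 => t _.
  by rewrite lee_fin powR_ge0.
by [].
Qed.

Lemma good_Lp (a b p : R) : 1 <= p -> good (S_Lp a b p).
Proof.
move=> p1; have p0 : 0 < p by exact: (lt_le_trans ltr01 p1).
have mab : measurable `[a, b]%classic by exact: measurable_itv.
split.
- split => [t _ //|r _|]; first by split; [exact: (@measurable_cst _ _ R R `[a, b]%classic (flow (fzero R) r))|exact: (@measurable_cst _ _ R R `[a, b]%classic (fupp (fzero R) r))].
  have -> : (fun t : R => ((fD (fzero R) (fzero R)) `^ p)%:E) = cst 0%E.
    by apply: funext => t; rewrite fDxx powR0 ?gt_eqF.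
  exact: integrable0.
- move=> c f [zf mf If]; split; first exact: zero_out_scale.
    move=> r hr; have [m1 m2] := mf r hr; case: (boolP (0 <= c)) => c0.
      have -> : (fun t => flow (fscale c (f t)) r) = cst c \* (fun t => flow (f t) r).
        by apply: funext => t; rewrite /= flow_fscale // c0.
      have -> : (fun t => fupp (fscale c (f t)) r) = cst c \* (fun t => fupp (f t) r).
        by apply: funext => t; rewrite /= fupp_fscale // c0.
      by split; apply: measurable_realfun.measurable_funM => //; exact: measurable_cst.
    have -> : (fun t => flow (fscale c (f t)) r) = cst c \* (fun t => fupp (f t) r).
      by apply: funext => t; rewrite /= flow_fscale // (negbTE c0).
    have -> : (fun t => fupp (fscale c (f t)) r) = cst c \* (fun t => flow (f t) r).
      by apply: funext => t; rewrite /= fupp_fscale // (negbTE c0).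
    by split; apply: measurable_realfun.measurable_funM => //; exact: measurable_cst.
  have -> : (fun t => ((fD (fscale c (f t)) (fzero R)) `^ p)%:E) =
      (fun t => (`|c| `^ p)%:E * ((fD (f t) (fzero R)) `^ p)%:E)%E.
    by apply: funext => t; rewrite fD_fzero_scale powRM ?fD_ge0 // EFinM.
  exact: integrableZl.
- move=> c f [zf mf If]; rewrite /snorm /= /fDp.
  apply: (Lp_aux mab p0 If) => //.
  + by move=> t; exact: fD_ge0.
  + by move=> t; rewrite fDC fD_fzero_scale.
  + by move=> t; rewrite fDC.
- by move=> f; apply: funext => t /=; exact: fscale0.
- by move=> f; rewrite /snorm /=; exact: powR_ge0.
Qed.

Lemma lp_aux1 (F H : nat -> R) (k p : R) : 0 <= k -> (forall n, 0 <= H n) ->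
  (forall n, F n = k * H n) ->
  (\sum_(n <oo) ((F n) `^ p)%:E = (k `^ p)%:E * \sum_(n <oo) ((H n) `^ p)%:E)%E.
Proof.
move=> k0 H0 eF; rewrite -nneseriesZl; last by move=> n _; rewrite lee_fin powR_ge0.
by apply: eq_eseriesr => n _; rewrite eF powRM // EFinM.
Qed.

Lemma lp_aux2 (F H : nat -> R) (k p : R) : 0 <= k -> (forall n, 0 <= H n) ->
  (forall n, F n = k * H n) ->
  (\sum_(n <oo) ((H n) `^ p)%:E < +oo)%E -> (\sum_(n <oo) ((F n) `^ p)%:E < +oo)%E.
Proof.
move=> k0 H0 eF h; rewrite (@lp_aux1 F H k p k0 H0 eF).
by apply: lte_mul_pinfty => //; rewrite lee_fin powR_ge0.
Qed.

Lemma lp_aux3 (F G H : nat -> R) (k p : R) : 0 < p -> 0 <= k -> (forall n, 0 <= H n) ->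
  (forall n, F n = k * H n) -> (forall n, G n = H n) ->
  (\sum_(n <oo) ((H n) `^ p)%:E < +oo)%E ->
  (fine (\sum_(n <oo) ((F n) `^ p)%:E)) `^ p^-1 =
  k * (fine (\sum_(n <oo) ((G n) `^ p)%:E)) `^ p^-1.
Proof.
move=> p0 k0 H0 eF eG h; rewrite (@lp_aux1 F H k p k0 H0 eF).
have -> : (\sum_(n <oo) ((G n) `^ p)%:E = \sum_(n <oo) ((H n) `^ p)%:E)%E.
  by apply: eq_eseriesr => n _; rewrite eG.
have S0 : (0 <= \sum_(n <oo) ((H n) `^ p)%:E)%E.
  by apply: nneseries_ge0 => n _; rewrite lee_fin powR_ge0.
rewrite fineM //; last by rewrite ge0_fin_numE.
by apply: powR_scale => //; apply: fine_ge0.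
Qed.

Lemma good_lp (p : R) : 1 <= p -> good (S_lp p).
Proof.
move=> p1; have p0 : 0 < p by exact: (lt_le_trans ltr01 p1).
split.
- rewrite /= /is_lp eseries0 ?ltry // => n _ _; by rewrite fDxx powR0 ?gt_eqF.
- move=> c x hx; rewrite /= /is_lp.
  apply: (lp_aux2 (H := fun n => fD (x n) (fzero R)) (k := `|c|)) => //.
    by move=> n; exact: fD_ge0.
  by move=> n; rewrite fD_fzero_scale.
- move=> c x hx; rewrite /snorm /= /rho_p.
  apply: (lp_aux3 (H := fun n => fD (x n) (fzero R))) => //.
  + by move=> n; exact: fD_ge0.
  + by move=> n; rewrite fDC fD_fzero_scale.
  + by move=> n; rewrite fDC.
- by move=> x; apply: funext => n /=; exact: fscale0.
- by move=> x; rewrite /snorm /=; exact: powR_ge0.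
Qed.

Lemma goodP (s : fspace R) : wf_space s -> good s.
Proof.
elim: s => [|a b|a b p|a b p|p| | | |s1 IH1 s2 IH2] /=.
- by move=> _; exact: good_RF.
- by move=> _; exact: good_C.
- by case=> _ p1; exact: good_Lp.
- by move=> ab; exact: good_Cp.
- by move=> p1; exact: good_lp.
- by move=> _; exact: good_m.
- by move=> _; exact: good_c.
- by move=> _; exact: good_c0.
case=> w1 w2; have [z1 sc1 n1 zz1 g1] := IH1 w1; have [z2 sc2 n2 zz2 g2] := IH2 w2.
split.
- by split.
- by move=> c [x1 x2] [m1 m2]; split; [exact: sc1|exact: sc2].
- move=> c [x1 x2] [m1 m2]; rewrite /snorm /=.
  by rewrite -/(snorm _) -/(snorm _) (n1 _ _ m1) (n2 _ _ m2) maxr_pMr.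
- by move=> [x1 x2]; rewrite /= zz1 zz2.
- by move=> [x1 x2]; rewrite /snorm /= le_max -/(snorm _) g1.
Qed.

End J.


Section K.
Variable R : realType.

Lemma abstract_bound (X : Type) (mem : X -> Prop) (N : X -> R)
  (sc : R -> X -> X) (z : X) (F : X -> R) :
  mem z -> N z = 0 ->
  (forall c x, mem x -> mem (sc c x)) ->
  (forall c x, mem x -> N (sc c x) = `|c| * N x) ->
  (forall x, 0 <= N x) ->
  (forall c x, mem x -> F (sc c x) = `|c| * F x) ->
  (forall x, 0 <= F x) ->
  (exists2 d, 0 < d & forall x, mem x -> N x < d -> F x < 1) ->
  (forall x, mem x -> F x <= inf [set M | 0 < M /\ forall x, mem x -> F x <= M * N x] * N x) /\
  inf [set M | 0 < M /\ forall x, mem x -> F x <= M * N x] =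
  sup [set F x | x in [set x | mem x /\ N x <= 1]].
Proof.
move=> mz Nz msc Nsc N0 Fsc F0 [d d0 hd].
set Ms := [set M | _].
set T := [set F x | x in _].
have Fnull : forall x, mem x -> N x = 0 -> F x = 0.
  move=> x mx nx; apply/eqP; rewrite eq_le F0 andbT leNgt; apply/negP => fx.
  have := hd (sc (2 / F x) x) (msc _ _ mx); rewrite Nsc // nx mulr0 => /(_ d0).
  rewrite Fsc // ger0_norm ?divr_ge0 ?ltW // divfK ?gt_eqF //.
  by rewrite ltNge ler1n.
have bnd : forall x, mem x -> F x <= (2 / d) * N x.
  move=> x mx; have [nx0|nx0] := eqVneq (N x) 0.
    by rewrite Fnull // nx0 mulr0.
  have nx : 0 < N x by rewrite lt0r nx0 N0.
  set c := d / (2 * N x).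
  have c0 : 0 < c by rewrite /c divr_gt0 // mulr_gt0.
  have := hd (sc c x) (msc _ _ mx); rewrite Nsc // gtr0_norm // Fsc // gtr0_norm //.
  have nxn : N x != 0 := lt0r_neq0 nx.
  have -> : c * N x = d / 2 by rewrite /c; field.
  move=> /(_ ltac:(lra)) h.
  rewrite -(ler_pM2l c0) mulrA.
  have dn : d != 0 := lt0r_neq0 d0.
  have e2 : c * (2 / d) = (N x)^-1 by rewrite /c; field; rewrite nxn dn.
  by rewrite e2 mulVf //; exact: ltW.
have Msne : Ms !=set0 by exists (2 / d); split => //; rewrite divr_gt0.
have Mslb : lbound Ms 0 by move=> M [M0 _]; exact: ltW.
have Ms_inf : has_lbound Ms by exists 0.
have inf0 : 0 <= inf Ms by apply: lb_le_inf.
have part1 : forall x, mem x -> F x <= inf Ms * N x.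
  move=> x mx; have [nx0|nx0] := eqVneq (N x) 0.
    by rewrite Fnull // nx0 mulr0.
  have nx : 0 < N x by rewrite lt0r nx0 N0.
  rewrite -ler_pdivrMr //; apply: lb_le_inf => // M [M0 hM].
  by rewrite ler_pdivrMr // hM.
split => //.
have Tne : T !=set0 by exists (F z), z => //; split => //; rewrite Nz ler01.
have Tub : ubound T (inf Ms).
  move=> _ [x [mx nx1] <-]; apply: le_trans (part1 x mx) _.
  by rewrite ler_piMr.
apply/eqP; rewrite eq_le; apply/andP; split; last exact: ge_sup.
have hsT : has_sup T by split => //; exists (inf Ms).
set S := sup T.
have key : forall x, mem x -> F x <= S * N x.
  move=> x mx; have [nx0|nx0] := eqVneq (N x) 0.
    by rewrite Fnull // nx0 mulr0.
  have nx : 0 < N x by rewrite lt0r nx0 N0.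
  have : T (F (sc (N x)^-1 x)).
    exists (sc (N x)^-1 x) => //; split; first exact: msc.
    rewrite Nsc // ger0_norm; last by rewrite invr_ge0 N0.
    by rewrite mulVf // gt_eqF.
  move/(sup_upper_bound hsT); rewrite Fsc // ger0_norm; last by rewrite invr_ge0 N0.
  by rewrite mulrC -ler_pdivrMr // mulrC.
have S0 : 0 <= S by apply: sup_ge0' => _ [x _ <-].
apply/ler_addgt0Pr => e e0; apply: ge_inf => //; split; first by rewrite ltr_wpDl.
move=> x mx; apply: le_trans (key x mx) _; apply: ler_wpM2r => //.
by rewrite lerDl ltW.
Qed.

End K.

Unset Implicit Arguments.

Theorem theorem3p3 (R : realType) (s : fspace R) : wf_space s ->
  (forall A : carrier s -> R,
     lin_functional A -> cont0_functional A ->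
     (forall x, smem x -> `|A x| <= opnorm_functional A * snorm x) /\
     opnorm_functional A = sup [set `|A x| | x in [set x | smem x /\ snorm x <= 1]]) /\
  (forall A : carrier s -> carrier s,
     lin_operator A -> cont0_operator A ->
     (forall x, smem x -> snorm (A x) <= opnorm_operator A * snorm x) /\
     opnorm_operator A = sup [set snorm (A x) | x in [set x | smem x /\ snorm x <= 1]]).
Proof.
move=> ws; have [z sc nsc zz g] := goodP ws.
have Nz : snorm (szero s) = 0.
  by have := nsc 0 (szero s) z; rewrite zz normr0 mul0r.
split.
- move=> A [addA scA] cA.
  have A0 : A (szero s) = 0 by rewrite -(zz (szero s)) scA // mul0r.
  apply: (abstract_bound z Nz sc nsc g).
  + by move=> c x mx; rewrite scA // normrM.
  + by move=> x; exact: normr_ge0.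
  + have [d d0 hd] := cA 1 ltr01; exists d => // x mx nx.
    by have := hd x mx nx; rewrite A0 subr0.
- move=> A [mA [addA scA]] cA.
  have A0 : A (szero s) = szero s by rewrite -(zz (szero s)) scA // zz.
  apply: (abstract_bound z Nz sc nsc g).
  + by move=> c x mx; rewrite scA // nsc //; exact: mA.
  + by move=> x; exact: g.
  + have [d d0 hd] := cA 1 ltr01; exists d => // x mx nx.
    by have := hd x mx nx; rewrite A0.
Qed.
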